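(* Let $r\ge1$ and $n\ge1$ be integers and let $\mathcal P(n,r,1)$ be the set of lattice paths with steps $(1,1)$ (up) and $(1,-r)$ (down) from $(0,0)$ to $((r+1)n+1,1)$ (so with $rn+1$ up steps and $n$ down steps). (1) For each $k=1,2,\dots,rn+1$, the number of paths in $\mathcal P(n,r,1)$ that start with an up step and have exactly $k$ up steps starting on or below the $x$-axis is $\frac{1}{rn+1}\binom{(r+1)n}{n}$. (2) For each $k=1,2,\dots,n$, the number of paths in $\mathcal P(n,r,1)$ that start with a down step and have exactly $k$ down steps starting on or below the $x$-axis is $\frac1n\binom{(r+1)n}{n-1}$. (3) For each $k=1,2,\dots,(r+1)n+1$, the number of paths in $\mathcal P(n,r,1)$ with exactly $k$ vertices on or below the $x$-axis is $\frac{1}{(r+1)n+1}\binom{(r+1)n+1}{n}$.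
   Context: A step starts on or below the $x$-axis if its initial vertex has $y$-coordinate $\le0$; a vertex is on or below the $x$-axis if its $y$-coordinate is $\le0$ (the final vertex, at height $1$, is never counted). *)

(* Defs.v *)
From HB Require Import structures.
From mathcomp Require Import all_boot all_order all_algebra.
Set Implicit Arguments. Unset Strict Implicit. Unset Printing Implicit Defensive.
Import Order.TTheory GRing.Theory Num.Theory.

(* A lattice path is a sequence of steps: true = up step (1,1),
   false = down step (1,-r). *)

Definition height (r : nat) (s : seq bool) : int :=
  \sum_(b <- s) (if b then 1%:Z else - (r%:Z))%R.

Definition in_P (n r : nat) (p : seq bool) : bool :=
  (size p == (r.+1 * n).+1) && (count negb p == n).

(* the i-th vertex is (i, height r (take i p)); step i (0-based) starts at
   vertex i.  Step i starts on or below the x-axis iff height <= 0. *)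
Definition starts_below (r : nat) (p : seq bool) (i : nat) : bool :=
  (height r (take i p) <= 0)%R.

Definition n_up_below (r : nat) (p : seq bool) : nat :=
  count (fun i => nth false p i && starts_below r p i) (iota 0 (size p)).

Definition n_down_below (r : nat) (p : seq bool) : nat :=
  count (fun i => ~~ nth false p i && starts_below r p i) (iota 0 (size p)).

(* number of vertices on or below the x-axis; vertices 0 .. size p - 1
   (the final vertex is not counted) *)
Definition n_vert_below (r : nat) (p : seq bool) : nat :=
  count (fun i => starts_below r p i) (iota 0 (size p)).

(* Main.v *)
Require Import Defs.
From HB Require Import structures.
From mathcomp Require Import all_boot all_order all_algebra zify.
Import Order.TTheory GRing.Theory Num.Theory.
Set Implicit Arguments. Unset Strict Implicit.

Definition H r (p : seq bool) m := height r (take m p).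
Definition Rk r p (j m : nat) : bool :=
  if (j <= m)%N then (H r p m <= H r p j)%R else (H r p m < H r p j)%R.
Definition rank (P : bool -> bool) r p j :=
  count (fun m => P (nth false p m) && Rk r p j m) (iota 0 (size p)).
Definition cnt (P : bool -> bool) r p :=
  count (fun i => P (nth false p i) && starts_below r p i) (iota 0 (size p)).

Lemma height_cat r s1 s2 : height r (s1 ++ s2) = (height r s1 + height r s2)%R.
Proof. by rewrite /height big_cat. Qed.

Lemma intfact (a b : int) : ((1 - a + b <= 0) = (b < a))%R.
Proof. apply/idP/idP; lia. Qed.

Lemma cnt_rot P r p j : height r p = 1%R -> (j < size p)%N ->
  cnt P r (rot j p) = rank P r p j.
Proof.
move=> hp hj; rewrite /cnt /rank size_rot.
set N := size p.
have e1 : N = (N - j) + j by rewrite subnK // ltnW.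
have e2 : N = j + (N - j) by rewrite subnKC // ltnW.
rewrite {1}e1 {2}e2 !iotaD !count_cat addnC /= add0n.
have hsd : size (drop j p) = N - j by rewrite size_drop.
clear e1 e2; clearbody N.
congr (_ + _).
- rewrite -[N - j]addn0 iotaDl count_map; apply: eq_in_count => i /=.
  rewrite mem_iota /= add0n => hi.
  rewrite /rot nth_cat hsd /starts_below take_cat hsd.
  case: ifP => [h|_].
    Timeout 5 (by exfalso; move: h; rewrite ltnNge leq_addr).
  Timeout 5 rewrite addnC addnK (nth_take _ hi).
  Timeout 5 rewrite (take_takel _ (ltnW hi)).
  rewrite height_cat.
  have -> : height r (drop j p) = (1 - H r p j)%R.
    rewrite -hp -{2}(cat_take_drop j p) height_cat /H.
    Timeout 5 by rewrite addrAC subrr add0r.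
  Timeout 5 by rewrite /Rk leqNgt hi /= intfact.
- have -> : iota j (N - j) = map (addn j) (iota 0 (N - j)) by rewrite -iotaDl addn0.
  rewrite count_map; apply: eq_in_count => i /=.
  rewrite mem_iota /= add0n => hi.
  rewrite /rot nth_cat hsd hi nth_drop /starts_below take_cat hsd hi.
  rewrite /Rk leq_addr /H takeD height_cat.
  congr (_ && _); apply/idP/idP; lia.
Qed.

Lemma Rk_refl r p j : Rk r p j j.
Proof. by rewrite /Rk leqnn lexx. Qed.

Lemma Rk_trans r p j1 j2 m : Rk r p j2 j1 -> Rk r p j1 m -> Rk r p j2 m.
Proof.
rewrite /Rk; move: (H r p j1) (H r p j2) (H r p m) => a b c.
case: (leqP j2 j1); case: (leqP j1 m); case: (leqP j2 m); lia.
Qed.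

Lemma Rk_total r p j1 j2 : Rk r p j2 j1 || Rk r p j1 j2.
Proof.
rewrite /Rk; move: (H r p j1) (H r p j2) => a b.
case: (leqP j2 j1); case: (leqP j1 j2); lia.
Qed.

Lemma Rk_anti r p j1 j2 : j1 != j2 -> Rk r p j2 j1 -> ~~ Rk r p j1 j2.
Proof.
rewrite /Rk; move: (H r p j1) (H r p j2) => a b.
case: (leqP j2 j1); case: (leqP j1 j2); lia.
Qed.

Lemma count_le_in (T : eqType) (a b : pred T) s :
  (forall y, y \in s -> a y -> b y) -> (count a s <= count b s)%N.
Proof.
elim: s => [|y s IH] //= hab.
have h1 := IH (fun z hz => hab z (mem_behead (s:=y::s) hz)).
have h2 : (a y <= b y)%N.
  by case ha: (a y) => //; rewrite (hab y (mem_head _ _) ha).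
exact: leq_add.
Qed.

Lemma count_lt (T : eqType) (a b : pred T) s x :
  (forall y, y \in s -> a y -> b y) -> x \in s -> b x -> ~~ a x ->
  (count a s < count b s)%N.
Proof.
elim: s => [|y s IH] //= hab; rewrite inE => /orP [/eqP <- | hx] hb ha.
- rewrite hb (negbTE ha) /= add0n ltnS; apply: count_le_in => z hz.
  exact: hab (mem_behead (s:=y::s) hz).
- have h1 := IH (fun z hz => hab z (mem_behead (s:=y::s) hz)) hx hb ha.
  have h2 : (a y <= b y)%N.
    by case ha': (a y) => //; rewrite (hab y (mem_head _ _) ha').
  by rewrite -addnS; apply: leq_add.
Qed.

Lemma rank_lt (P : bool -> bool) r p j1 j2 : j1 != j2 -> (j2 < size p)%N -> P (nth false p j2) ->
  Rk r p j2 j1 -> (rank P r p j1 < rank P r p j2)%N.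
Proof.
move=> hne hj2 hP h; apply: (count_lt (x := j2)).
- by move=> y _ /andP [-> h1] /=; exact: Rk_trans h h1.
- by rewrite mem_iota.
- by rewrite hP Rk_refl.
- by rewrite negb_and (Rk_anti hne h) orbT.
Qed.

Lemma rank_inj (P : bool -> bool) r p j1 j2 : (j1 < size p)%N -> (j2 < size p)%N ->
  P (nth false p j1) -> P (nth false p j2) ->
  rank P r p j1 = rank P r p j2 -> j1 = j2.
Proof.
move=> h1 h2 p1 p2 he; apply/eqP; apply: contraT => hne.
case/orP: (Rk_total r p j1 j2) => h.
- by have := rank_lt hne h2 p2 h; rewrite he ltnn.
- rewrite eq_sym in hne.
  by have := rank_lt hne h1 p1 h; rewrite he ltnn.
Qed.

Lemma rank_ge1 (P : bool -> bool) r p j : (j < size p)%N -> P (nth false p j) -> (0 < rank P r p j)%N.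
Proof.
move=> hj hP; rewrite /rank -has_count; apply/hasP; exists j.
  by rewrite mem_iota.
by rewrite hP Rk_refl.
Qed.

Lemma rank_le (P : bool -> bool) r p j :
  (rank P r p j <= count (fun m => P (nth false p m)) (iota 0 (size p)))%N.
Proof. by apply: sub_count => m /andP []. Qed.

Lemma exactly_one (N : nat) (J : {set 'I_N}) (f : nat -> nat) k :
  {in J &, forall j1 j2 : 'I_N, f j1 = f j2 -> j1 = j2} ->
  (forall j : 'I_N, j \in J -> (0 < f j <= #|J|)%N) ->
  (0 < k <= #|J|)%N -> #|[set j in J | f j == k]| = 1.
Proof.
move=> finj frange hk.
have [c hc] : exists c, #|J| = c.+1.
  by case: #|J| hk => [|c] hk; [case/andP: hk => a b; lia | exists c].
rewrite hc in frange hk.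
pose G (j : 'I_N) : 'I_c.+1 := inord (f j).-1.
have hGv : forall j, j \in J -> (G j : nat) = (f j).-1.
  move=> j hj; rewrite /G inordK //.
  by case/andP: (frange j hj) => h1 h2; rewrite -ltnS prednK.
have Ginj : {in J &, injective G}.
  move=> j1 j2 h1 h2 he; apply: finj => //.
  have := congr1 val he; rewrite /= !hGv // => e.
  case/andP: (frange j1 h1) => a1 _; case/andP: (frange j2 h2) => a2 _.
  by rewrite -(prednK a1) -(prednK a2) e.
have himg : G @: J = [set: 'I_c.+1].
  apply/eqP; rewrite eqEcard subsetT cardsT card_ord card_in_imset // hc.
  by rewrite ltnSn.
have : (inord k.-1 : 'I_c.+1) \in G @: J by rewrite himg inE.
case/imsetP => j0 hj0 e0.
case/andP: hk => k1 k2.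
have ek : f j0 = k.
  have := congr1 val e0; rewrite /= hGv // inordK; last by rewrite prednK.
  case/andP: (frange j0 hj0) => a1 _.
  by move=> e; rewrite -(prednK a1) -(prednK k1) e.
suff -> : [set j in J | f j == k] = [set j0] by rewrite cards1.
apply/setP => x; rewrite !inE.
apply/andP/eqP => [[hx /eqP hfx]|->]; last by rewrite hj0 ek eqxx.
by apply: finj => //; rewrite hfx ek.
Qed.

Lemma card_J (N : nat) (Q : nat -> bool) :
  #|[set j : 'I_N | Q j]| = count Q (iota 0 N).
Proof.
rewrite -sum1_card (eq_bigl (fun j : 'I_N => Q j)); last by move=> j; rewrite inE.
by rewrite -(big_mkord Q (fun _ => 1)) sum1_count /index_iota subn0.
Qed.

Lemma count_nth (P : bool -> bool) (p : seq bool) :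
  count (fun m => P (nth false p m)) (iota 0 (size p)) = count P p.
Proof. by rewrite -{3}(mkseq_nth false p) /mkseq count_map. Qed.

Lemma per_path (P : bool -> bool) r (N : nat) (p : seq bool) k :
  size p = N -> height r p = 1%R -> (0 < k <= count P p)%N ->
  #|[set j : 'I_N | P (nth false p j) && (cnt P r (rot j p) == k)]| = 1.
Proof.
move=> hs hp hk.
pose J := [set j : 'I_N | P (nth false p j)].
have hJ : #|J| = count P p by rewrite /J (card_J N (fun m => P (nth false p m))) -count_nth hs.
have -> : [set j : 'I_N | P (nth false p j) && (cnt P r (rot j p) == k)]
        = [set j in J | rank P r p j == k].
  apply/setP => j; rewrite !inE cnt_rot //; last by rewrite hs.
apply: exactly_one; last by rewrite hJ.
- move=> j1 j2; rewrite !inE => h1 h2 e; apply: val_inj.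
  apply: (@rank_inj P r p j1 j2); rewrite ?hs //.
- move=> j; rewrite inE => hj; apply/andP; split; first by apply: rank_ge1; rewrite ?hs.
  rewrite hJ -count_nth.
  exact: rank_le.
Qed.

Lemma height_count r s :
  height r s = ((count id s)%:Z - (count negb s * r)%:Z)%R.
Proof.
elim: s => [|b s IH]; first by rewrite /height big_nil.
rewrite /height big_cons -/(height r s) IH /=.
case: b => /=; lia.
Qed.

Lemma in_P_height n r p : in_P n r p -> height r p = 1%R.
Proof.
case/andP => /eqP hs /eqP hc.
have hid : count id p = r * n + 1.
  have := count_predC id p; rewrite hs.
  have -> : count (predC id) p = count negb p by [].
  rewrite hc; lia.
rewrite height_count hid hc; lia.
Qed.

Lemma in_P_rot n r p j : in_P n r (rot j p) = in_P n r p.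
Proof. by rewrite /in_P size_rot (permP (etrans (perm_rot j p p) (perm_refl p))). Qed.

Lemma nth_rot0 (p : seq bool) j : (j < size p)%N -> nth false (rot j p) 0 = nth false p j.
Proof.
move=> hj; rewrite /rot nth_cat size_drop subn_gt0 hj nth_drop addn0 //.
Qed.

Lemma card_as_sum (T : finType) (X : {set T}) : #|X| = \sum_(t : T) (t \in X : nat).
Proof. by rewrite -sum1_card big_mkcond /=; apply: eq_bigr => t _; case: (t \in X). Qed.

Lemma main_count (P : bool -> bool) n r k :
  (forall p, in_P n r p -> (0 < k <= count P p)%N) ->
  #|[set p : ((r.+1 * n).+1).-tuple bool |
      in_P n r p && P (nth false p 0) && (cnt P r p == k)]| * (r.+1 * n).+1
  = #|[set p : ((r.+1 * n).+1).-tuple bool | in_P n r p]|.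
Proof.
move=> hk.
set N := (r.+1 * n).+1.
set A := [set p : N.-tuple bool | in_P n r p && P (nth false p 0) && (cnt P r p == k)].
pose f (j : 'I_N) (t : N.-tuple bool) : N.-tuple bool := rot_tuple j t.
have finj : forall j, injective (f j).
  by move=> j t1 t2 /(congr1 val) /= /rot_inj; apply: val_inj.
have e1 : forall j, #|[set t | f j t \in A]| = #|A|.
  by move=> j; have := card_preimset A (finj j).
have e2 : \sum_(j : 'I_N) #|[set t | f j t \in A]| = #|A| * N.
  by rewrite (eq_bigr _ (fun j _ => e1 j)) sum_nat_const card_ord mulnC.
rewrite -e2.
under eq_bigr do rewrite card_as_sum.
rewrite exchange_big /= card_as_sum; apply: eq_bigr => t _.
transitivity #|[set j : 'I_N | f j t \in A]|; first by rewrite card_as_sum; apply: eq_bigr => j _; rewrite !inE.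
rewrite inE.
case hP: (in_P n r t) => /=.
- have hs : size t = N by rewrite size_tuple.
  rewrite -(per_path (P := P) (r := r) (N := N) (p := t) (k := k)) //.
  + apply: eq_card => j; rewrite !inE /= in_P_rot hP /= nth_rot0 //.
    by rewrite hs.
  + exact: in_P_height hP.
  + exact: hk.
- apply/eqP; rewrite cards_eq0; apply/eqP/setP => j; rewrite !inE /=.
  by rewrite in_P_rot hP.
Qed.

Lemma card_negb (N m : nat) :
  #|[set t : N.-tuple bool | count negb t == m]| = 'C(N, m).
Proof.
pose phi (t : N.-tuple bool) : {set 'I_N} := [set i | ~~ tnth t i].
have phic : forall t, #|phi t| = count negb t.
  move=> t; rewrite /phi.
  have -> : [set i : 'I_N | ~~ tnth t i] = [set i : 'I_N | ~~ nth false t i].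
    by apply/setP => i; rewrite !inE (tnth_nth false).
  rewrite (card_J N (fun m => ~~ nth false t m)).
  by have := count_nth negb t; rewrite size_tuple.
have phiinj : injective phi.
  move=> t1 t2 e; apply: eq_from_tnth => i.
  by move/setP: e => /(_ i); rewrite /phi !inE => /negb_inj.
have := card_draws 'I_N m; rewrite card_ord => <-.
rewrite -(card_imset _ phiinj); apply: eq_card => B.
rewrite !inE; apply/imsetP/idP.
- by case=> t; rewrite inE => ht ->; rewrite phic.
- move=> hB; exists [tuple ~~ (i \in B) | i < N].
    by rewrite inE -phic (_ : phi _ = B) // /phi; apply/setP => i; rewrite inE tnth_mktuple negbK.
  by apply/setP => i; rewrite /phi inE tnth_mktuple negbK.
Qed.

Lemma count_id_P n r p : in_P n r p -> count id p = r * n + 1.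
Proof.
case/andP => /eqP hs /eqP hc.
have := count_predC id p; rewrite hs.
have -> : count (predC id) p = count negb p by [].
rewrite hc; lia.
Qed.

Lemma card_S n r :
  #|[set p : ((r.+1 * n).+1).-tuple bool | in_P n r p]| = 'C((r.+1 * n).+1, n).
Proof.
rewrite -card_negb; apply: eq_card => t; rewrite !inE /in_P size_tuple eqxx //.
Qed.

Theorem theorem13 (r n : nat) (hr : (1 <= r)%N) (hn : (1 <= n)%N) :
  let N := (r.+1 * n).+1 in
  (forall k : nat, (1 <= k <= r * n + 1)%N ->
     (#|[set p : N.-tuple bool |
          in_P n r p && (nth false p 0 == true) && (n_up_below r p == k)]|%:R
      : rat)
     = ((r * n + 1)%:R)^-1 * ('C(r.+1 * n, n))%:R)%R
  /\
  (forall k : nat, (1 <= k <= n)%N ->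
     (#|[set p : N.-tuple bool |
          in_P n r p && (nth false p 0 == false) && (n_down_below r p == k)]|%:R
      : rat)
     = (n%:R)^-1 * ('C(r.+1 * n, n.-1))%:R)%R
  /\
  (forall k : nat, (1 <= k <= N)%N ->
     (#|[set p : N.-tuple bool | in_P n r p && (n_vert_below r p == k)]|%:R
      : rat)
     = (N%:R)^-1 * ('C(N, n))%:R)%R.
Proof.
move=> N; split; [|split].
- move=> k hk.
  have := main_count (P := id) (n := n) (r := r) (k := k).
  rewrite card_S.
  have -> : #|[set p : N.-tuple bool | in_P n r p && id (nth false p 0) && (cnt id r p == k)]|
     = #|[set p : N.-tuple bool | in_P n r p && (nth false p 0 == true) && (n_up_below r p == k)]|.
    by apply: eq_card => p; rewrite !inE eqb_id.
  set a := #|_|.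
  move=> h; have {h} := h (fun p hp => ltac:(by rewrite (count_id_P hp))).
  move=> h.
  have hb : 'C(r.+1 * n, n) = (r * n + 1) * a.
    apply/eqP; rewrite -(eqn_pmul2r (ltn0Sn (r.+1 * n))).
    have := mul_bin_down N n; rewrite /N /= => e.
    rewrite mulnC e -h.
    have -> : (r.+1 * n).+1 - n = r * n + 1 by lia.
    by rewrite mulnA.
  rewrite hb natrM mulrA mulVf ?mul1r //.
  by rewrite pnatr_eq0 addn1.
- move=> k hk.
  have := main_count (P := negb) (n := n) (r := r) (k := k).
  rewrite card_S.
  have -> : #|[set p : N.-tuple bool | in_P n r p && negb (nth false p 0) && (cnt negb r p == k)]|
     = #|[set p : N.-tuple bool | in_P n r p && (nth false p 0 == false) && (n_down_below r p == k)]|.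
    by apply: eq_card => p; rewrite !inE eqbF_neg.
  set a := #|_|.
  move=> h; have {h} := h (fun p hp => ltac:(by case/andP: hp => _ /eqP ->)).
  move=> h.
  have hb : 'C(r.+1 * n, n.-1) = n * a.
    apply/eqP; rewrite -(eqn_pmul2r (ltn0Sn (r.+1 * n))).
    have := mul_bin_diag N n.-1; rewrite /N /= (prednK hn) => e.
    by rewrite mulnC e -h mulnA.
  rewrite hb natrM mulrA mulVf ?mul1r //.
  by rewrite pnatr_eq0 -lt0n.
- move=> k hk.
  have := main_count (P := fun _ => true) (n := n) (r := r) (k := k).
  rewrite card_S.
  have -> : #|[set p : N.-tuple bool | in_P n r p && true && (cnt (fun _ => true) r p == k)]|
     = #|[set p : N.-tuple bool | in_P n r p && (n_vert_below r p == k)]|.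
    by apply: eq_card => p; rewrite !inE andbT.
  set a := #|_|.
  move=> h; have {h} := h (fun p hp => ltac:(by rewrite (count_predT p); case/andP: hp => /eqP ->)).
  move=> h.
  by rewrite -h natrM mulrC mulfK // pnatr_eq0.
Qed.
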